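(* Let $c>0$, $n\ge 1$, and let $\mathbb{R}^n_c=\{\mathbf{v}\in\mathbb{R}^n:\|\mathbf{v}\|<c\}$ be equipped with Möbius addition $\oplus$, Möbius scalar multiplication $\otimes$ and Möbius coaddition $\boxplus$ (defined in the context). Let $A,B\in\mathbb{R}^n_c$ be distinct, and for $t\in\mathbb{R}$ let $$L_{AB}(t)=A\oplus\big((\ominus A\oplus B)\otimes t\big).$$ Then for all $t\in\mathbb{R}$, $$2\otimes L_{AB}(t)=A\boxplus L_{AB}(2t).$$
   Context: Möbius addition in the ball $\mathbb{R}^n_c$ is $$\mathbf{u}\oplus\mathbf{v}=\frac{\big(1+\frac{2}{c^2}\mathbf{u}\cdot\mathbf{v}+\frac{1}{c^2}\|\mathbf{v}\|^2\big)\mathbf{u}+\big(1-\frac{1}{c^2}\|\mathbf{u}\|^2\big)\mathbf{v}}{1+\frac{2}{c^2}\mathbf{u}\cdot\mathbf{v}+\frac{1}{c^4}\|\mathbf{u}\|^2\|\mathbf{v}\|^2},$$ with $\ominus\mathbf{v}=-\mathbf{v}$ and $\mathbf{u}\ominus\mathbf{v}=\mathbf{u}\oplus(-\mathbf{v})$. Scalar multiplication: for $r\in\mathbb{R}$ and $\mathbf{v}\neq\mathbf{0}$, $r\otimes\mathbf{v}=\mathbf{v}\otimes r=c\tanh\!\big(r\tanh^{-1}(\|\mathbf{v}\|/c)\big)\frac{\mathbf{v}}{\|\mathbf{v}\|}$, and $r\otimes\mathbf{0}=\mathbf{0}$. The gyration generated by $\mathbf{u},\mathbf{v}$ is the map $\mathrm{gyr}[\mathbf{u},\mathbf{v}]\mathbf{w}=\ominus(\mathbf{u}\oplus\mathbf{v})\oplus\big(\mathbf{u}\oplus(\mathbf{v}\oplus\mathbf{w})\big)$.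 Möbius coaddition is $\mathbf{a}\boxplus\mathbf{b}=\mathbf{a}\oplus\mathrm{gyr}[\mathbf{a},\ominus\mathbf{b}]\mathbf{b}$ for $\mathbf{a},\mathbf{b}\in\mathbb{R}^n_c$. *)

(* Defs.v *)
From mathcomp Require Import all_boot all_order all_algebra.
From mathcomp Require Import reals sequences exp.
Set Implicit Arguments. Unset Strict Implicit. Unset Printing Implicit Defensive.
Import Order.TTheory GRing.Theory Num.Theory.
Local Open Scope ring_scope.

Section Mobius.
Variables (R : realType) (n : nat) (c : R).

Definition dotv (u v : 'rV[R]_n) : R := \sum_(i < n) u 0 i * v 0 i.
Definition normv (v : 'rV[R]_n) : R := Num.sqrt (dotv v v).

Definition in_ball (v : 'rV[R]_n) : Prop := normv v < c.

Definition tanh (x : R) : R := (expR x - expR (- x)) / (expR x + expR (- x)).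
Definition artanh (y : R) : R := ln ((1 + y) / (1 - y)) / 2.

Definition madd (u v : 'rV[R]_n) : 'rV[R]_n :=
  (1 + 2 / c ^+ 2 * dotv u v + 1 / c ^+ 4 * normv u ^+ 2 * normv v ^+ 2)^-1 *:
  ((1 + 2 / c ^+ 2 * dotv u v + 1 / c ^+ 2 * normv v ^+ 2) *: u
   + (1 - 1 / c ^+ 2 * normv u ^+ 2) *: v).

Definition mopp (v : 'rV[R]_n) : 'rV[R]_n := - v.
Definition msub (u v : 'rV[R]_n) : 'rV[R]_n := madd u (mopp v).

Definition mscale (r : R) (v : 'rV[R]_n) : 'rV[R]_n :=
  if v == 0 then 0
  else (c * tanh (r * artanh (normv v / c)) / normv v) *: v.

Definition gyr (u v w : 'rV[R]_n) : 'rV[R]_n :=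
  madd (mopp (madd u v)) (madd u (madd v w)).

Definition mcoadd (a b : 'rV[R]_n) : 'rV[R]_n := madd a (gyr a (mopp b) b).

Definition gline (A B : 'rV[R]_n) (t : R) : 'rV[R]_n :=
  madd A (mscale t (madd (mopp A) B)).
End Mobius.

(* Main.v *)
Require Import Defs.
From mathcomp Require Import all_boot all_order all_algebra.
From mathcomp Require Import reals sequences exp.
From mathcomp Require Import ring lra.
Import Order.TTheory GRing.Theory Num.Theory.
Local Open Scope ring_scope.

Section Vec.
Context {R : realType} {n : nat}.
Implicit Types (u v w x y : 'rV[R]_n).

Lemma dotvC u v : dotv u v = dotv v u.
Proof. by rewrite /dotv; apply: eq_bigr => i _; rewrite mulrC. Qed.

Lemma dotvDl u v w : dotv (u + v) w = dotv u w + dotv v w.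
Proof. by rewrite /dotv -big_split; apply: eq_bigr => i _; rewrite mxE mulrDl. Qed.

Lemma dotvZl r u v : dotv (r *: u) v = r * dotv u v.
Proof. by rewrite /dotv mulr_sumr; apply: eq_bigr => i _; rewrite mxE mulrA. Qed.

Lemma dotvDr u v w : dotv u (v + w) = dotv u v + dotv u w.
Proof. by rewrite dotvC dotvDl !(dotvC u). Qed.

Lemma dotvZr r u v : dotv u (r *: v) = r * dotv u v.
Proof. by rewrite dotvC dotvZl dotvC. Qed.

Lemma dotvNl u v : dotv (- u) v = - dotv u v.
Proof. by rewrite -scaleN1r dotvZl mulN1r. Qed.

Lemma dotvNr u v : dotv u (- v) = - dotv u v.
Proof. by rewrite dotvC dotvNl dotvC. Qed.

Lemma dotv0l v : dotv 0 v = 0.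
Proof. by rewrite -(scale0r 0) dotvZl mul0r. Qed.

Lemma dotv_ge0 u : 0 <= dotv u u.
Proof. by rewrite /dotv; apply: sumr_ge0 => i _; rewrite -expr2 sqr_ge0. Qed.

Lemma normv2 u : normv u ^+ 2 = dotv u u.
Proof. by rewrite /normv sqr_sqrtr // dotv_ge0. Qed.

Lemma normv_ge0 u : 0 <= normv u.
Proof. exact: sqrtr_ge0. Qed.

Lemma dot_comb (P Q : 'rV[R]_n) (x1 y1 x2 y2 : R) :
  dotv (x1 *: P + y1 *: Q) (x2 *: P + y2 *: Q) =
  x1 * x2 * dotv P P + (x1 * y2 + y1 * x2) * dotv P Q + y1 * y2 * dotv Q Q.
Proof.
rewrite !dotvDl !dotvDr !dotvZl !dotvZr (dotvC Q P); ring.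
Qed.

Lemma CS u v : dotv u v ^+ 2 <= dotv u u * dotv v v.
Proof.
have H t : 0 <= dotv u u + 2 * t * dotv u v + t ^+ 2 * dotv v v.
  have := dotv_ge0 (1 *: u + t *: v); rewrite dot_comb.
  by congr (_ <= _); ring.
have [d0|dpos] := eqVneq (dotv v v) 0.
  rewrite d0 mulr0.
  have [b0|bn0] := eqVneq (dotv u v) 0; first by rewrite b0 expr0n.
  have := H (- (dotv u u + 1) / (2 * dotv u v)).
  rewrite d0 mulr0 addr0.
  have -> : dotv u u + 2 * (- (dotv u u + 1) / (2 * dotv u v)) * dotv u v = -1.
    by field; rewrite bn0.
  lra.
have dp : 0 < dotv v v by rewrite lt0r dpos dotv_ge0.
have := H (- dotv u v / dotv v v).
have -> : dotv u u + 2 * (- dotv u v / dotv v v) * dotv u v +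
   (- dotv u v / dotv v v) ^+ 2 * dotv v v
   = (dotv u u * dotv v v - dotv u v ^+ 2) / dotv v v.
  by field; rewrite dpos.
rewrite pmulr_lge0 ?invr_gt0 //; lra.
Qed.

End Vec.

Section Coord.
Context {R : realType} {n : nat}.
Variable (c : R).
Implicit Types (u v w : 'rV[R]_n).

Definition kk : R := 1 / c ^+ 2.
Definition Dm (x y : 'rV[R]_n) := 1 + 2 * (kk * dotv x y) + (kk * dotv x x) * (kk * dotv y y).

Lemma madd_alt (x y : 'rV[R]_n) : madd c x y = (Dm x y)^-1 *:
  ((1 + 2 * (kk * dotv x y) + kk * dotv y y) *: x + (1 - kk * dotv x x) *: y).
Proof.
have h4 : 1 / c ^+ 4 = kk * kk by rewrite /kk !div1r -invfM -exprD.
have h2 : 2 / c ^+ 2 = 2 * kk by rewrite /kk mul1r.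
rewrite /madd /Dm !normv2 h4 h2 -/kk; congr (_^-1 *: (_ *: _ + _ *: _)); ring.
Qed.

Lemma madd_negl (x : 'rV[R]_n) : madd c (- x) x = 0.
Proof.
rewrite madd_alt dotvNl dotvNl dotvNr opprK.
rewrite scalerN -scaleNr -scalerDl.
have -> : - (1 + 2 * (kk * - dotv x x) + kk * dotv x x) + (1 - kk * dotv x x) = 0 by ring.
by rewrite scale0r scaler0.
Qed.

Lemma madd_0r (x : 'rV[R]_n) : madd c x 0 = x.
Proof.
rewrite madd_alt /Dm !(dotvC x 0) !dotv0l scaler0 addr0.
have -> : (1 + 2 * (kk * 0) + kk * dotv x x * (kk * 0)) = 1 by ring.
have -> : (1 + 2 * (kk * 0) + kk * 0) = 1 by ring.
by rewrite invr1 !scale1r.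
Qed.

Variables (P Q : 'rV[R]_n).
Definition vc (x1 y1 : R) := x1 *: P + y1 *: Q.
Definition al := kk * dotv P P.
Definition be := kk * dotv P Q.
Definition de := kk * dotv Q Q.
Definition dc x1 y1 x2 y2 := x1 * x2 * al + (x1 * y2 + y1 * x2) * be + y1 * y2 * de.
Definition mD x1 y1 x2 y2 :=
  1 + 2 * dc x1 y1 x2 y2 + dc x1 y1 x1 y1 * dc x2 y2 x2 y2.
Definition mN1 x1 y1 x2 y2 :=
  (1 + 2 * dc x1 y1 x2 y2 + dc x2 y2 x2 y2) * x1 + (1 - dc x1 y1 x1 y1) * x2.
Definition mN2 x1 y1 x2 y2 :=
  (1 + 2 * dc x1 y1 x2 y2 + dc x2 y2 x2 y2) * y1 + (1 - dc x1 y1 x1 y1) * y2.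

Lemma dot_vc x1 y1 x2 y2 : kk * dotv (vc x1 y1) (vc x2 y2) = dc x1 y1 x2 y2.
Proof. by rewrite /vc dot_comb /dc /al /be /de; ring. Qed.

Lemma vc10 : P = vc 1 0.
Proof. by rewrite /vc scale1r scale0r addr0. Qed.
Lemma vc01 : Q = vc 0 1.
Proof. by rewrite /vc scale1r scale0r add0r. Qed.
Lemma vcN (x : 'rV[R]_n) x1 y1 : x = vc x1 y1 -> - x = vc (- x1) (- y1).
Proof. by move=> ->; rewrite /vc opprD !scaleNr. Qed.
Lemma vcZ r (x : 'rV[R]_n) x1 y1 : x = vc x1 y1 -> r *: x = vc (r * x1) (r * y1).
Proof. by move=> ->; rewrite /vc scalerDr !scalerA. Qed.
Lemma vc_eq x1 y1 x2 y2 : x1 = x2 -> y1 = y2 -> vc x1 y1 = vc x2 y2.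
Proof. by move=> -> ->. Qed.

Lemma madd_vc (x y : 'rV[R]_n) x1 y1 x2 y2 : x = vc x1 y1 -> y = vc x2 y2 ->
  madd c x y = vc ((mD x1 y1 x2 y2)^-1 * mN1 x1 y1 x2 y2)
                  ((mD x1 y1 x2 y2)^-1 * mN2 x1 y1 x2 y2).
Proof.
move=> -> ->; rewrite madd_alt !dot_vc /Dm /mD /mN1 /mN2 !dot_vc /vc.
rewrite !scalerDr !scalerA addrACA -!scalerDl; congr (_ *: _ + _ *: _); ring.
Qed.
End Coord.
Arguments vcN {R n P Q x x1 y1}.
Arguments vcZ {R n P Q} r {x x1 y1}.
Arguments vc_eq {R n P Q x1 y1 x2 y2}.
Arguments madd_vc {R n} c {P Q x y x1 y1 x2 y2}.

Section Ball.
Context {R : realType} {n : nat}.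
Variable (c : R).

Lemma ball_iff (x : 'rV[R]_n) : 0 < c -> in_ball c x <-> kk c * dotv x x < 1.
Proof.
move=> hc; rewrite /in_ball /normv /kk.
have c2 : 0 < c ^+ 2 by rewrite exprn_gt0.
rewrite -{1}(gtr0_norm hc) -sqrtr_sqr ltr_sqrt // mul1r mulrC ltr_pdivrMr // mul1r.
by split.
Qed.

Lemma Dpos (a b d : R) : 0 <= a -> a < 1 -> 0 <= d -> d < 1 -> b ^+ 2 <= a * d ->
  0 < 1 + 2 * b + a * d.
Proof.
move=> a0 a1 d0 d1 hb.
have p0 : 0 <= a * d by apply: mulr_ge0.
have p1 : a * d < 1.
  have : a * d <= a * 1 by apply: ler_wpM2l => //; apply: ltW.
  lra.
rewrite ltNge; apply/negP => h.
have hb' : 0 <= - (2 * b) - (1 + a * d) by lra.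
have : (1 + a * d) ^+ 2 <= (2 * b) ^+ 2.
  have : 0 <= (- (2 * b) - (1 + a * d)) * (- (2 * b) + (1 + a * d)).
    by apply: mulr_ge0; lra.
  rewrite !expr2; lra.
nra.
Qed.

Lemma CSk (P Q : 'rV[R]_n) : be c P Q ^+ 2 <= al c P * de c Q.
Proof.
rewrite /be /al /de.
have -> : (kk c * dotv P Q)^+2 = kk c ^+2 * dotv P Q ^+2 by ring.
have -> : kk c * dotv P P * (kk c * dotv Q Q) = kk c ^+ 2 * (dotv P P * dotv Q Q) by ring.
by apply: ler_wpM2l; [exact: sqr_ge0 | exact: CS].
Qed.

Lemma al_ge0 (P : 'rV[R]_n) : 0 < c -> 0 <= al c P.
Proof.
move=> hc; rewrite /al /kk; apply: mulr_ge0; last exact: dotv_ge0.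
by apply: divr_ge0 => //; apply: exprn_ge0; exact: ltW.
Qed.
Lemma de_ge0 (P : 'rV[R]_n) : 0 < c -> 0 <= de c P.
Proof. exact: al_ge0. Qed.
End Ball.

Section Coadd.
Context {R : realType} {n : nat}.
Variable (c : R).

Lemma coadd_cf (A B : 'rV[R]_n) : 0 < c -> in_ball c A -> in_ball c B ->
  mcoadd c A B = vc A B ((1 - de c B) / (1 - al c A * de c B))
                        ((1 - al c A) / (1 - al c A * de c B)).
Proof.
move=> hc /(ball_iff c A hc) hA /(ball_iff c B hc) hB.
rewrite /mcoadd /gyr /mopp madd_negl madd_0r.
have a0 := al_ge0 c A hc; have d0 := de_ge0 c B hc.
have cs := CSk c A B.
rewrite -/(al c A) in hA; rewrite -/(de c B) in hB.
set a := al c A in hA a0 cs *; set b := be c A B in cs *; set d := de c B in hB d0 cs *.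
have D1p : 0 < 1 + 2 * (- b) + a * d by apply: Dpos => //; rewrite sqrrN.
have D1n : 1 - 2 * b + a * d != 0 by apply: lt0r_neq0; lra.
have ha : 1 - a != 0 by apply: lt0r_neq0; lra.
have had : 1 - a * d != 0.
  apply: lt0r_neq0; have : a * d <= a * 1 by apply: ler_wpM2l => //; lra.
  lra.
have nB := vcN (vc01 A B).
have e1 : madd c A (- B) = vc A B ((1 - 2 * b + d) / (1 - 2 * b + a * d))
                                  (- (1 - a) / (1 - 2 * b + a * d)).
  rewrite (madd_vc c (vc10 A B) nB); apply: vc_eq;
  by rewrite /mD /mN1 /mN2 /dc -/a -/b -/d; field; rewrite ?D1n.
have e2 : madd c (- madd c A (- B)) A =
   vc A B (- 2 * d * (1 - b) / (1 - 2 * b + a * d)) ((1 - a * d) / (1 - 2 * b + a * d)).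
  rewrite (madd_vc c (vcN e1) (vc10 A B)).
  set D := mD _ _ _ _ _ _ _.
  have -> : D = (1 - a) ^+ 2 / (1 - 2 * b + a * d).
    by rewrite /D /mD /dc -/a -/b -/d; field; rewrite ?D1n.
  by apply: vc_eq; rewrite /mN1 /mN2 /dc -/a -/b -/d; field; rewrite ?D1n ?ha ?expf_neq0.
rewrite e2 (madd_vc c (vc10 A B) (erefl (vc A B _ _))).
set D := mD _ _ _ _ _ _ _.
have -> : D = (1 - a * d) ^+ 2 / (1 - 2 * b + a * d).
  by rewrite /D /mD /dc -/a -/b -/d; field; rewrite ?D1n.
by apply: vc_eq; rewrite /mN1 /mN2 /dc -/a -/b -/d; field; rewrite ?D1n ?had ?expf_neq0.
Qed.
End Coadd.

Section Tanh.
Context {R : realType}.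

Lemma tanh2 (x : R) : tanh (2 * x) = 2 * tanh x / (1 + tanh x ^+ 2).
Proof.
rewrite /tanh (_ : 2 * x = x + x); last by ring.
rewrite !expRN !expRD.
have e0 : expR x != 0 by rewrite gt_eqF ?expR_gt0.
have ep := expR_gt0 x.
field; rewrite e0 /=.
by rewrite !gt_eqF //; try nra.
Qed.

Lemma tanh_lt1 (x : R) : tanh x ^+ 2 < 1.
Proof.
rewrite /tanh expRN; have ep := expR_gt0 x.
set e := expR x in ep *.
have e1 : 0 < e^-1 by rewrite invr_gt0.
rewrite expr_div_n ltr_pdivrMr; last by rewrite exprn_gt0 //; lra.
rewrite mul1r !expr2; nra.
Qed.

Lemma tanh_ln (z : R) : 0 < z -> tanh (ln z) = (z - z^-1) / (z + z^-1).
Proof. by move=> hz; rewrite /tanh expRN lnK. Qed.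

Lemma scale2_coef (c s : R) : 0 < s -> s < c ->
  c * tanh (2 * artanh (s / c)) / s = 2 / (1 + kk c * s ^+ 2).
Proof.
move=> s0 sc; have c0 : 0 < c by apply: lt_trans s0 sc.
have cn : c != 0 by rewrite gt_eqF.
have sn : s != 0 by rewrite gt_eqF.
have z0 : 0 < (1 + s / c) / (1 - s / c).
  have u0 : 0 < s / c by rewrite divr_gt0.
  have u1 : s / c < 1 by rewrite ltr_pdivrMr // mul1r.
  apply: divr_gt0; lra.
rewrite /artanh (_ : 2 * (ln ((1 + s / c) / (1 - s / c)) / 2) =
   ln ((1 + s / c) / (1 - s / c))); last by field.
rewrite tanh_ln // /kk.
have h1 : c - s != 0 by rewrite gt_eqF // subr_gt0.
have h2 : c + s != 0 by rewrite gt_eqF //; lra.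
field; rewrite cn sn h1 h2 /= !gt_eqF //; nra.
Qed.

End Tanh.

Section Scale.
Context {R : realType} {n : nat}.
Variable c : R.

Lemma dotv_eq0 (x : 'rV[R]_n) : dotv x x = 0 -> x = 0.
Proof.
move=> h; apply/rowP => i; rewrite mxE.
have H : forall j : 'I_n, true -> 0 <= x 0 j * x 0 j.
  by move=> j _; rewrite -expr2 sqr_ge0.
have := psumr_eq0P H h (i:=i) isT.
by move=> /= /eqP; rewrite mulf_eq0 orbb => /eqP.
Qed.

Lemma normv_gt0 (x : 'rV[R]_n) : x != 0 -> 0 < normv x.
Proof.
move=> xn; rewrite lt0r normv_ge0 andbT; apply/eqP => h.
by move/eqP: xn; apply; apply: dotv_eq0; rewrite -normv2 h expr0n.
Qed.

Lemma mscale2 (x : 'rV[R]_n) : 0 < c -> in_ball c x ->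
  mscale c 2 x = (2 / (1 + kk c * dotv x x)) *: x.
Proof.
move=> hc hx; rewrite /mscale; case: eqP => [->|/eqP xn]; first by rewrite scaler0.
by rewrite scale2_coef ?normv_gt0 // normv2.
Qed.

Lemma mscale_ball (t : R) (v : 'rV[R]_n) : 0 < c -> in_ball c (mscale c t v).
Proof.
move=> hc; apply/(ball_iff c _ hc); rewrite /mscale; case: eqP => [_|/eqP vn].
  by rewrite dotv0l mulr0 ltr01.
set T := tanh (t * artanh (normv v / c)).
have nv := normv_gt0 _ vn.
have T1 := tanh_lt1 (t * artanh (normv v / c)); rewrite -/T in T1.
have cn : c != 0 by rewrite gt_eqF.
have nn : normv v != 0 by rewrite gt_eqF.
have -> : kk c * dotv ((c * T / normv v) *: v) ((c * T / normv v) *: v) = T ^+ 2.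
  rewrite dotvZl dotvZr -normv2 /kk; field; rewrite cn nn.
  by [].
done.
Qed.

Lemma mscale_double (t : R) (v : 'rV[R]_n) : 0 < c ->
  mscale c (2 * t) v = mscale c 2 (mscale c t v).
Proof.
move=> hc; rewrite {3}/mscale; case: eqP => [->|/eqP vn].
  by rewrite /mscale !eqxx.
set T := tanh (t * artanh (normv v / c)).
have nv := normv_gt0 _ vn.
have T1 := tanh_lt1 (t * artanh (normv v / c)); rewrite -/T in T1.
have cn : c != 0 by rewrite gt_eqF.
have nn : normv v != 0 by rewrite gt_eqF.
have dw : kk c * dotv ((c * T / normv v) *: v) ((c * T / normv v) *: v) = T ^+ 2.
  rewrite dotvZl dotvZr -normv2 /kk; field; rewrite cn nn.
  by [].
rewrite mscale2 //; last by apply/(ball_iff c _ hc); rewrite dw.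
rewrite dw scalerA /mscale (negbTE vn) -(mulrA 2 t) tanh2 -/T.
congr (_ *: _); field; rewrite nn /=.
by rewrite gt_eqF //; have := sqr_ge0 T; lra.
Qed.
End Scale.

Lemma vc_sub {R : realType} {n : nat} (P Q : 'rV[R]_n) x y x2 y2 :
  vc P (vc P Q x2 y2) x y = vc P Q (x + y * x2) (y * y2).
Proof. by rewrite /vc scalerDr !scalerA addrA -scalerDl. Qed.

Section Main.
Context {R : realType} {n : nat}.
Variable c : R.

Lemma main_cf (A w : 'rV[R]_n) : 0 < c -> in_ball c A -> in_ball c w ->
  mscale c 2 (madd c A w) =
  mcoadd c A (madd c A ((2 / (1 + kk c * dotv w w)) *: w)).
Proof.
move=> hc hA0 hw0.
have /(ball_iff c A hc) hA := hA0; have /(ball_iff c w hc) hw := hw0.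
have a0 := al_ge0 c A hc; have d0 := de_ge0 c w hc.
have cs := CSk c A w.
rewrite -/(al c A) in hA; rewrite -/(de c w) in hw *.
set a := al c A in hA a0 cs *; set b := be c A w in cs *; set d := de c w in hw d0 cs *.
have Dp : 0 < 1 + 2 * b + a * d by apply: Dpos.
have Dn : 1 + 2 * b + a * d != 0 by rewrite gt_eqF.
have ha : 1 - a != 0 by rewrite gt_eqF //; lra.
have hd1 : 1 + d != 0 by rewrite gt_eqF //; lra.
have eL : madd c A w = vc A w ((1 + 2 * b + d) / (1 + 2 * b + a * d))
                              ((1 - a) / (1 + 2 * b + a * d)).
  rewrite (madd_vc c (vc10 A w) (vc01 A w)); apply: vc_eq;
  by rewrite /mD /mN1 /mN2 /dc -/a -/b -/d; field; rewrite ?Dn.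
have kL : kk c * dotv (madd c A w) (madd c A w) =
          1 - (1 - a) * (1 - d) / (1 + 2 * b + a * d).
  by rewrite eL dot_vc /dc -/a -/b -/d; field; rewrite ?Dn.
have kLp : 0 < (1 - a) * (1 - d) / (1 + 2 * b + a * d).
  by apply: divr_gt0 => //; apply: mulr_gt0; lra.
rewrite mscale2 //; last by apply/(ball_iff c _ hc); rewrite kL; lra.
rewrite kL (vcZ _ eL).
set s := 2 / (1 + d).
have sd : s ^+ 2 * d < 1.
  have -> : s ^+ 2 * d = 4 * d / (1 + d) ^+ 2 by rewrite /s; field.
  rewrite ltr_pdivrMr; last by rewrite exprn_gt0 //; lra.
  nra.
have s0 : 0 <= s by rewrite /s divr_ge0 //; lra.
have D2p : 0 < 1 + 2 * (s * b) + a * (s ^+ 2 * d).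
  apply: Dpos => //; first by apply: mulr_ge0 => //; apply: sqr_ge0.
  have -> : (s * b) ^+ 2 = s ^+ 2 * b ^+ 2 by ring.
  have -> : a * (s ^+ 2 * d) = s ^+ 2 * (a * d) by ring.
  by apply: ler_wpM2l => //; exact: sqr_ge0.
have D2n : 1 + 2 * (s * b) + a * (s ^+ 2 * d) != 0 by rewrite gt_eqF.
have eL2 : madd c A (s *: w) =
   vc A w ((1 + 2 * (s * b) + s ^+ 2 * d) / (1 + 2 * (s * b) + a * (s ^+ 2 * d)))
          ((1 - a) * s / (1 + 2 * (s * b) + a * (s ^+ 2 * d))).
  rewrite (madd_vc c (vc10 A w) (vcZ s (vc01 A w))); apply: vc_eq;
  by rewrite /mD /mN1 /mN2 /dc -/a -/b -/d; field; rewrite ?D2n.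
have kL2 : kk c * dotv (madd c A (s *: w)) (madd c A (s *: w)) =
          1 - (1 - a) * (1 - s ^+ 2 * d) / (1 + 2 * (s * b) + a * (s ^+ 2 * d)).
  by rewrite eL2 dot_vc /dc -/a -/b -/d; field; rewrite ?D2n.
have kL2p : 0 < (1 - a) * (1 - s ^+ 2 * d) / (1 + 2 * (s * b) + a * (s ^+ 2 * d)).
  by apply: divr_gt0 => //; apply: mulr_gt0; lra.
rewrite coadd_cf //; last by apply/(ball_iff c _ hc); rewrite kL2; lra.
have kL0 : 0 <= kk c * dotv (madd c A w) (madd c A w).
  apply: mulr_ge0; last exact: dotv_ge0.
  by rewrite /kk divr_ge0 // exprn_ge0 // ltW.
rewrite kL in kL0.
have kL1 : (1 - a) * (1 - d) <= 1 + 2 * b + a * d.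
  move: kL0; rewrite subr_ge0 ler_pdivrMr // mul1r; done.
have hQ1 : (1 + d + 2 * (2 * b)) * (1 + d) + a * (4 * d) =
   (1 + d) ^+ 2 * (1 + 2 * (s * b) + a * (s ^+ 2 * d)) by rewrite /s; field.
have hQ1p : 0 < (1 + d + 2 * (2 * b)) * (1 + d) + a * (4 * d).
  by rewrite hQ1; apply: mulr_gt0 => //; rewrite exprn_gt0 //; lra.
have hQ2 : (1 + d + 2 * (2 * b)) * (1 + d) + a * (4 * d) -
      a * ((1 + d + 2 * (2 * b)) * (1 + d) + a * (4 * d) -
       (1 - a) * ((1 + d) ^+ 2 - 4 * d)) != 0.
  rewrite gt_eqF //.
  have -> : forall Q : R, Q - a * (Q - (1 - a) * ((1 + d) ^+ 2 - 4 * d)) =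
     (1 - a) * (Q + a * (1 - d) ^+ 2) by move=> Q; ring.
  apply: mulr_gt0; first lra.
  have := sqr_ge0 (1 - d); have : 0 <= a * (1 - d) ^+ 2 by apply: mulr_ge0 => //; exact: sqr_ge0.
  lra.
have hQ3 : 1 + 2 * b + a * d + (1 + 2 * b + a * d - (1 - a) * (1 - d)) != 0.
  by rewrite gt_eqF //; lra.
rewrite /de kL2 -/a eL2 vc_sub; apply: vc_eq; rewrite /s; field.
all: by rewrite hd1 (gt_eqF hQ1p) hQ2 Dn hQ3.
Qed.
End Main.

Theorem theorem1 (R : realType) (n : nat) (c : R) (A B : 'rV[R]_n) :
  0 < c -> (1 <= n)%N ->
  in_ball c A -> in_ball c B -> A != B ->
  forall t : R,
    mscale c 2 (gline c A B t) = mcoadd c A (gline c A B (2 * t)).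
Proof.
move=> hc _ hA _ _ t; rewrite /gline.
have hw := mscale_ball c t (madd c (mopp A) B) hc.
rewrite mscale_double // (mscale2 c _ hc hw).
exact: main_cf.
Qed.
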